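(* Let $\mathcal V$ be a congruence modular variety, $\mathbb A\in\mathcal V$, $k\neq l\in\mathbb N$, and let $R\le\mathbb A^{2^{\{k,l\}}}$ be a $(2)$-dimensional tolerance of $\mathbb A$. If $\mathrm{face}_k^0(R)$ (viewed as a binary relation on $A$) is a congruence of $\mathbb A$ and $\mathrm{face}_k(R)$ is a congruence of the algebra $\mathrm{face}_k^0(R)$ (a subalgebra of $\mathbb A^2$), then $R$ is a $(2)$-dimensional congruence of $\mathbb A$.
   Context: Cube notation. $2=\{0,1\}$; for finite $S\subseteq\mathbb N$, $2^S$ is the set of functions $S\to 2$ and an $(S)$-cube over $A$ is $\gamma=(\gamma_f)_{f\in2^S}\in A^{2^S}$. For $i\in S$, $j\in 2$: $\mathrm{face}_i^j(\gamma)\in A^{2^{S\setminus\{i\}}}$ is $g\mapsto\gamma_{g\cup\{(i,j)\}}$; $\mathrm{glue}_{\{i\}}(\zeta,\eta)$ is the unique cube with $\mathrm{face}_i^0=\zeta$, $\mathrm{face}_i^1=\eta$; $\mathrm{refl}_i^j(\gamma)=\mathrm{glue}_{\{i\}}(\mathrm{face}_i^j\gamma,\mathrm{face}_i^j\gamma)$; $\mathrm{sym}_i(\gamma)=\mathrm{glue}_{\{i\}}(\mathrm{face}_i^1\gamma,\mathrm{face}_i^0\gamma)$. For $R\subseteq A^{2^S}$, $\mathrm{face}_i^j(R)=\{\mathrm{face}_i^j(\gamma):\gamma\in R\}$ and $\mathrm{face}_i(R)=\{(\mathrm{face}_i^0\gamma,\mathrm{face}_i^1\gamma):\gamma\in R\}$.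 A $(\{l\})$-cube $\zeta$ is identified with the pair $(\zeta_{\{(l,0)\}},\zeta_{\{(l,1)\}})$. With $|S|=n$: a subuniverse $R$ of $\mathbb A^{2^S}$ is an $(n)$-dimensional tolerance of $\mathbb A$ if $\mathrm{refl}_i^j(\gamma),\mathrm{sym}_i(\gamma)\in R$ for all $\gamma\in R$, $i\in S$, $j\in 2$; it is an $(n)$-dimensional congruence if moreover $\mathrm{face}_i(R)$ is a transitive relation for every $i\in S$. *)

(* Defs.v *)
From mathcomp Require Import ssreflect ssrfun ssrbool eqtype ssrnat fintype.
Set Implicit Arguments.
Unset Strict Implicit.
Unset Printing Implicit Defensive.

Record signature := Signature { op :> Type; arity : op -> nat }.

Definition ops_on (sg : signature) (T : Type) :=
  forall o : sg, ('I_(arity o) -> T) -> T.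

Inductive term (sg : signature) : Type :=
| Var : nat -> term sg
| App : forall o : sg, ('I_(arity o) -> term sg) -> term sg.

Fixpoint eval (sg : signature) (T : Type) (I : ops_on sg T) (env : nat -> T)
  (t : term sg) : T :=
  match t with
  | Var n => env n
  | App o args => I o (fun i => eval I env (args i))
  end.

Definition models (sg : signature) (Sigma : term sg -> term sg -> Prop)
  (T : Type) (I : ops_on sg T) : Prop :=
  forall s t, Sigma s t -> forall env : nat -> T, eval I env s = eval I env t.

Definition rel (T : Type) := T -> T -> Prop.

Definition subuniverse (sg : signature) (T : Type) (I : ops_on sg T)
  (P : T -> Prop) : Prop :=
  forall (o : sg) (args : 'I_(arity o) -> T),
    (forall i, P (args i)) -> P (I o args).

Definition congruence_in (sg : signature) (T : Type) (I : ops_on sg T)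
  (P : T -> Prop) (th : rel T) : Prop :=
  [/\ (forall x y, th x y -> P x /\ P y),
      (forall x, P x -> th x x),
      (forall x y, th x y -> th y x),
      (forall x y z, th x y -> th y z -> th x z) &
      (forall (o : sg) (a b : 'I_(arity o) -> T),
          (forall i, th (a i) (b i)) -> th (I o a) (I o b))].

Definition congruence (sg : signature) (T : Type) (I : ops_on sg T)
  (th : rel T) : Prop := congruence_in I (fun _ => True) th.

Definition cmeet (T : Type) (a b : rel T) : rel T := fun x y => a x y /\ b x y.
Definition cjoin (sg : signature) (T : Type) (I : ops_on sg T) (a b : rel T)
  : rel T :=
  fun x y => forall th, congruence I th ->
    (forall u v, a u v -> th u v) -> (forall u v, b u v -> th u v) -> th x y.

Definition con_modular (sg : signature) (T : Type) (I : ops_on sg T) : Prop :=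
  forall a b c : rel T, congruence I a -> congruence I b -> congruence I c ->
    (forall x y, a x y -> c x y) ->
    forall x y, cjoin I a (cmeet b c) x y <-> cmeet (cjoin I a b) c x y.

Definition cm_variety (sg : signature) (Sigma : term sg -> term sg -> Prop)
  : Prop :=
  forall (B : Type) (J : ops_on sg B), models Sigma J -> con_modular J.

(** A ({k,l})-cube over A, i.e. an element of A^(2^{k,l}), is represented as
    [g : bool -> bool -> A] with [g a b] = g_f where f(k) = a, f(l) = b
    (false = 0, true = 1). *)
Definition square (A : Type) := bool -> bool -> A.

Definition ops_pair (sg : signature) (A : Type) (I : ops_on sg A)
  : ops_on sg (A * A) :=
  fun o args => (I o (fun i => (args i).1), I o (fun i => (args i).2)).

Definition ops_square (sg : signature) (A : Type) (I : ops_on sg A)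
  : ops_on sg (square A) :=
  fun o args => fun a b => I o (fun i => args i a b).

Definition face_k (A : Type) (j : bool) (g : square A) : A * A := (g j false, g j true).
Definition face_l (A : Type) (j : bool) (g : square A) : A * A := (g false j, g true j).

Definition refl_k (A : Type) (j : bool) (g : square A) : square A := fun _ b => g j b.
Definition refl_l (A : Type) (j : bool) (g : square A) : square A := fun a _ => g a j.
Definition sym_k (A : Type) (g : square A) : square A := fun a b => g (~~ a) b.
Definition sym_l (A : Type) (g : square A) : square A := fun a b => g a (~~ b).

Definition faceR_k (A : Type) (j : bool) (R : square A -> Prop) : rel A :=
  fun x y => exists g, R g /\ face_k j g = (x, y).
Definition faceR_l (A : Type) (j : bool) (R : square A -> Prop) : rel A :=
  fun x y => exists g, R g /\ face_l j g = (x, y).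

Definition facesR_k (A : Type) (R : square A -> Prop) : rel (A * A) :=
  fun p q => exists g, R g /\ face_k false g = p /\ face_k true g = q.
Definition facesR_l (A : Type) (R : square A -> Prop) : rel (A * A) :=
  fun p q => exists g, R g /\ face_l false g = p /\ face_l true g = q.

Definition transitive_rel (T : Type) (r : rel T) : Prop :=
  forall x y z, r x y -> r y z -> r x z.

Definition tolerance2 (sg : signature) (A : Type) (I : ops_on sg A)
  (R : square A -> Prop) : Prop :=
  [/\ subuniverse (ops_square I) R,
      (forall g j, R g -> R (refl_k j g)),
      (forall g j, R g -> R (refl_l j g)),
      (forall g, R g -> R (sym_k g)) &
      (forall g, R g -> R (sym_l g))].

Definition congruence2 (sg : signature) (A : Type) (I : ops_on sg A)
  (R : square A -> Prop) : Prop :=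
  [/\ tolerance2 I R, transitive_rel (facesR_k R) & transitive_rel (facesR_l R)].

(* Main.v *)
Require Import Defs.
From mathcomp Require Import ssreflect ssrfun ssrbool eqtype ssrnat fintype.
From Stdlib Require Import FunctionalExtensionality ProofIrrelevance.
Set Implicit Arguments.
Unset Strict Implicit.

Lemma cong_meet (sg : signature) (T : Type) (J : ops_on sg T) (a b : Defs.rel T) :
  congruence J a -> congruence J b -> congruence J (cmeet a b).
Proof.
case=> _ ra sa ta ca [_ rb sb tb cb]; split.
- by [].
- by move=> x _; split; [apply: ra|apply: rb].
- by move=> x y [h1 h2]; split; [apply: sa|apply: sb].
- by move=> x y z [h1 h2] [h3 h4]; split; [apply: ta h3|apply: tb h4].
- move=> o u v H; split; [apply: ca|apply: cb] => i; by case: (H i).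
Qed.

Lemma cong_pull (sg : signature) (T B : Type) (J : ops_on sg T) (JB : ops_on sg B)
  (P : B -> Prop) (th : Defs.rel B) (f : T -> B) :
  (forall o args, f (J o args) = JB o (fun i => f (args i))) ->
  (forall x, P (f x)) -> congruence_in JB P th ->
  congruence J (fun x y => th (f x) (f y)).
Proof.
move=> Hf HP [Hs Hr Hsy Htr Hc]; split.
- by [].
- by move=> x _; apply: Hr.
- by move=> x y; apply: Hsy.
- by move=> x y z; apply: Htr.
- by move=> o a b Hab; rewrite !Hf; apply: Hc.
Qed.

Lemma cong_ker (sg : signature) (T B : Type) (J : ops_on sg T) (JB : ops_on sg B)
  (f : T -> B) :
  (forall o args, f (J o args) = JB o (fun i => f (args i))) ->
  congruence J (fun x y => f x = f y).
Proof.
move=> Hf; split => //.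
- by move=> x y z -> ->.
- move=> o a b Hab; rewrite !Hf; congr (JB o _).
  by apply: functional_extensionality => i; apply: Hab.
Qed.

Lemma eval_hom (sg : signature) (T B : Type) (J : ops_on sg T) (JB : ops_on sg B)
  (f : T -> B) (Hf : forall o args, f (J o args) = JB o (fun i => f (args i)))
  (env : nat -> T) : forall t, f (eval J env t) = eval JB (fun n => f (env n)) t.
Proof.
fix IH 1; case => [n|o args] /=; first by [].
rewrite Hf; congr (JB o _); apply: functional_extensionality => i; exact: IH.
Qed.

Lemma shift (sg : signature) (T : Type) (J : ops_on sg T) (HM : con_modular J)
  (al be ga : Defs.rel T) : congruence J al -> congruence J be -> congruence J ga ->
  (forall x y, al x y -> be x y -> ga x y) ->
  forall x y z u, al y u -> be y x -> al x z -> ga x z -> be z u -> ga y u.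
Proof.
move=> Ca Cb Cg Hab x y z u h1 h2 h3 h4 h5.
have Cag := cong_meet Ca Cg.
have Hj : cjoin J (cmeet al ga) (cmeet be al) y u.
  apply: (proj2 (HM (cmeet al ga) be al Cag Cb Ca (fun x y h => proj1 h) y u)).
  split=> //.
  move=> th Cth Ha Hb; move: Cth; rewrite /congruence /congruence_in; case=> _ _ _ Ttr _.
  exact: (Ttr _ _ _ (Hb _ _ h2) (Ttr _ _ _ (Ha _ _ (conj h3 h4)) (Hb _ _ h5))).
apply: (Hj ga Cg).
- by move=> a b [].
- by move=> a b [hb ha]; apply: Hab.
Qed.

Section Triples.
Unset Implicit Arguments.
Variables (sg : signature) (A : Type) (I : ops_on sg A) (al : Defs.rel A).
Hypothesis Hal : congruence I al.
Set Implicit Arguments.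

Definition trip := {t : A * A * A | al t.1.1 t.1.2 /\ al t.1.2 t.2}.
Definition p0 (s : trip) := (sval s).1.1.
Definition p1 (s : trip) := (sval s).1.2.
Definition p2 (s : trip) := (sval s).2.

Lemma trip_ok (o : sg) (args : 'I_(arity o) -> trip) :
  al (I o (fun i => p0 (args i))) (I o (fun i => p1 (args i))) /\
  al (I o (fun i => p1 (args i))) (I o (fun i => p2 (args i))).
Proof.
case: Hal => _ _ _ _ Hc; split; apply: Hc => i;
  by case: (args i) => [[[x y] z] [? ?]].
Qed.

Definition Itrip : ops_on sg trip := fun o args =>
  exist _ (I o (fun i => p0 (args i)), I o (fun i => p1 (args i)),
           I o (fun i => p2 (args i))) (trip_ok args).

Lemma trip_models (Sigma : term sg -> term sg -> Prop) :
  models Sigma I -> models Sigma Itrip.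
Proof.
move=> HA s t Hst env.
have e0 := eval_hom (J := Itrip) (f := p0) (fun o args => erefl) env.
have e1 := eval_hom (J := Itrip) (f := p1) (fun o args => erefl) env.
have e2 := eval_hom (J := Itrip) (f := p2) (fun o args => erefl) env.
have E0 : p0 (eval Itrip env s) = p0 (eval Itrip env t) by rewrite !e0; apply: HA.
have E1 : p1 (eval Itrip env s) = p1 (eval Itrip env t) by rewrite !e1; apply: HA.
have E2 : p2 (eval Itrip env s) = p2 (eval Itrip env t) by rewrite !e2; apply: HA.
move: (eval Itrip env s) (eval Itrip env t) E0 E1 E2 =>
  [[[a b] c] pa] [[[a' b'] c'] pb] /= ea eb ec.
rewrite /p0 /p1 /p2 /= in ea eb ec; subst.
by rewrite (proof_irrelevance _ pa pb).
Qed.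

Definition mk x y z (h1 : al x y) (h2 : al y z) : trip := exist _ (x, y, z) (conj h1 h2).

End Triples.

Theorem lemma2p8 (sg : signature) (Sigma : term sg -> term sg -> Prop)
  (HV : cm_variety Sigma)
  (A : Type) (I : ops_on sg A) (HA : models Sigma I)
  (k l : nat) (Hkl : k <> l)
  (R : square A -> Prop) (HR : tolerance2 I R)
  (H0 : congruence I (faceR_k false R))
  (H1 : congruence_in (ops_pair I) (fun p => faceR_k false R p.1 p.2)
          (facesR_k R)) :
  congruence2 I R.
Proof.
set al := faceR_k false R in H0 H1 *.
set th := facesR_k R in H1 *.
have H1' := H1.
case: H1' => Hsub Hrefl Hsym Htr Hcomp.
have H0' := H0.
case: H0' => _ arefl _ atr _.
have rfl : forall a b c d, th (a, c) (b, d) -> th (c, c) (d, d).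
  move=> a b c d [g [Rg [e1 e2]]]; exists (refl_l true g); split.
    by case: HR => _ _ Hl _ _; apply: Hl.
  by case: e1 => _ <-; case: e2 => _ <-.
pose T := trip al.
pose J : ops_on sg T := Itrip H0.
have HM : con_modular J by apply: HV; apply: trip_models.
pose L (s : T) := (p0 s, p1 s).
pose Rr (s : T) := (p1 s, p2 s).
pose E (s : T) := (p0 s, p2 s).
have CL : congruence J (fun x y => th (L x) (L y)).
  apply: (cong_pull (JB := ops_pair I)) H1 => //.
  by move=> [[[a b] c] [h1 h2]].
have CR : congruence J (fun x y => th (Rr x) (Rr y)).
  apply: (cong_pull (JB := ops_pair I)) H1 => //.
  by move=> [[[a b] c] [h1 h2]].
have CE : congruence J (fun x y => th (E x) (E y)).
  apply: (cong_pull (JB := ops_pair I)) H1 => //.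
  by move=> [[[a b] c] [h1 h2]]; apply: atr h1 h2.
have K0 : congruence J (fun x y => p0 x = p0 y) by apply: (cong_ker (JB := I)).
have K1 : congruence J (fun x y => p1 x = p1 y) by apply: (cong_ker (JB := I)).
have K2 : congruence J (fun x y => p2 x = p2 y) by apply: (cong_ker (JB := I)).
have K12 := cong_meet K1 K2.
have K01 := cong_meet K0 K1.
have base : forall x y : T, cmeet (cmeet (fun x y => p1 x = p1 y)
      (fun x y => p2 x = p2 y)) (fun x y => th (L x) (L y)) x y ->
    cmeet (fun x y => p0 x = p0 y) (fun x y => p1 x = p1 y) x y ->
    th (E x) (E y).
  move=> x y [[_ e2] _] [e0 _]; rewrite /E e0 e2; apply: Hrefl => /=.
  case: y {e0 e2} => [[[a b] c] [h1 h2]] /=; exact: atr h1 h2.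
have step1 : forall x y : T, th (L x) (L y) -> th (Rr x) (Rr y) -> th (E x) (E y).
  move=> x y hL hR.
  have ax : al (p1 x) (p1 x) by apply: arefl.
  have ay : al (p1 y) (p1 y) by apply: arefl.
  pose w := mk ax (proj2 (proj2_sig x)).
  pose t := mk ay (proj2 (proj2_sig y)).
  apply: (shift HM (cong_meet CL CR) K12 CE _ (x := w) (z := t)).
  - move=> u v H Hk.
    apply: (shift HM (cong_meet K12 CL) K01 CE base
      (x := mk (proj1 (proj2_sig u)) (arefl _ Logic.I))
      (z := mk (proj1 (proj2_sig v)) (arefl _ Logic.I))).
    + exact: (conj Hk (proj1 H)).
    + by [].
    + split; [by case: Hk => e _; split; exact: e | exact: (proj1 H)].
    + exact: (proj1 H).
    + by [].
  - exact: (conj hL hR).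
  - by [].
  - exact: (conj (rfl _ _ _ _ hL) hR).
  - exact: hR.
  - by [].
have key : forall a b c d e f, th (a, c) (b, d) -> th (c, e) (d, f) -> th (a, e) (b, f).
  move=> a b c d e f hl hr.
  have [h1 h2] := Hsub _ _ hl.
  have [h3 h4] := Hsub _ _ hr.
  exact: (step1 (mk h1 h3) (mk h2 h4) hl hr).
split => //.
move=> p q r [g [Rg [Hgp Hgq]]] [h [Rh [Hhq Hhr]]].
have thg : th (g false false, g false true) (g true false, g true true).
  by exists g.
have thh : th (h false false, h false true) (h true false, h true true).
  by exists h.
move: Hgq; rewrite -Hhq; case=> e1 e2.
rewrite e1 e2 in thg.
have [m [Rm [m1 m2]]] := key _ _ _ _ _ _ thg thh.
exists m; split => //.
case: m1 m2 => a1 a2 [b1 b2]; rewrite -Hgp -Hhr /face_l.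
by rewrite a1 a2 b1 b2.
Qed.
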